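(* For every integer $n\ge 3$, the graph $R_n$ is a rooted directed path graph.
   Context: For $n\ge 3$, $R_n$ is the graph with vertex set $\bigcup_{i=1}^n\{a_i,b_i,c_i,d_i\}$ (all distinct, $4n$ vertices), in which two distinct vertices are adjacent iff they both belong to one of the sets $C_i=\{a_i,b_i,c_i,d_i\}$ ($1\le i\le n$) or $C'_i=\{a_j \mid i\le j\le n\}\cup\{b_i,b_{i+1},c_i\}$ ($1\le i\le n-1$); these sets are exactly the maximal cliques of $R_n$. A graph is a rooted directed path graph if it is the intersection graph of a family of directed paths in an arborescence (a rooted tree with all edges directed away from the root), i.e. vertices correspond to directed paths and two distinct vertices are adjacent iff their paths share a node. *)

(* Defs.v *)
From mathcomp Require Import all_boot.
Set Implicit Arguments. Unset Strict Implicit. Unset Printing Implicit Defensive.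

(** The arcs of the arborescence are [par v -> v] for [v <> r]
    (all directed away from the root). *)
Definition is_arborescence (N : finType) (par : N -> N) (r : N) : Prop :=
  par r = r /\ forall v : N, exists k : nat, iter k par v = r.

(** The directed path ending at node [b] and going [k] steps up towards the
    root (truncated at the root): its node set is
    {b, par b, ..., iter k par b}.  Every directed path of the arborescence
    (with at least one node) is of this form. *)
Definition on_dpath (N : finType) (par : N -> N) (b : N) (k : nat) (u : N) : Prop :=
  exists i : nat, i <= k /\ iter i par b = u.

Definition rooted_directed_path_graph (V : Type) (adj : V -> V -> Prop) : Prop :=
  exists (N : finType) (par : N -> N) (r : N),
    is_arborescence par r /\
    exists (bot : V -> N) (len : V -> nat),
      forall x y : V, x <> y ->
        (adj x y <-> exists u : N, on_dpath par (bot x) (len x) u /\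
                                   on_dpath par (bot y) (len y) u).

(** * The graph R_n.
    Vertices are pairs (i, l) with i : 'I_n (0-indexed, i.e. index i+1 of the
    paper) and l : 'I_4 encoding the letter (0 = a, 1 = b, 2 = c, 3 = d). *)
Definition Rvert (n : nat) := ('I_n * 'I_4)%type.

Definition inC (n : nat) (i : nat) (x : Rvert n) : Prop := nat_of_ord x.1 = i.

(** membership in C'_i, for 0-indexed i with i+1 < n (paper: 1 <= i+1 <= n-1):
    C'_i = {a_j | i <= j} ∪ {b_i, b_{i+1}, c_i} *)
Definition inC' (n : nat) (i : nat) (x : Rvert n) : Prop :=
  i.+1 < n /\
  [\/ (nat_of_ord x.2 = 0 /\ i <= x.1),
      (nat_of_ord x.2 = 1 /\ (nat_of_ord x.1 = i \/ nat_of_ord x.1 = i.+1)) |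
      (nat_of_ord x.2 = 2 /\ nat_of_ord x.1 = i)].

Definition R_adj (n : nat) (x y : Rvert n) : Prop :=
  x <> y /\
  ((exists i : nat, i < n /\ inC i x /\ inC i y) \/
   (exists i : nat, inC' i x /\ inC' i y)).

(* Main.v *)
Require Import Defs.
From mathcomp Require Import all_boot.
From mathcomp Require Import zify.
Set Implicit Arguments. Unset Strict Implicit. Unset Printing Implicit Defensive.

Section S.
Variable m : nat.
Hypothesis hm : 2 <= m.

Definition par (v : 'I_m.+1 * bool) : 'I_m.+1 * bool :=
  if v.2 then (inord v.1.-1, true) else (inord (minn v.1 (m-1)), true).

Definition bot (x : Rvert m.+1) : 'I_m.+1 * bool := (x.1, false).

Definition len (x : Rvert m.+1) : nat :=
  match val x.2 with
  | 0 => (minn x.1 (m-1)).+1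
  | 1 => if x.1 < m then 2 else 1
  | 2 => if x.1 < m then 1 else 0
  | _ => 0 end.

Lemma iterT k (i : 'I_m.+1) : iter k par (i,true) = (inord (i-k), true).
Proof.
elim: k => [|k IH]; first by rewrite subn0 inord_val.
have hi := ltn_ord i.
rewrite iterS IH /par /= inordK; last by lia.
by rewrite subnS.
Qed.

Lemma iterF k (i : 'I_m.+1) :
  iter k.+1 par (i,false) = (inord (minn i (m-1) - k), true).
Proof.
have hi := ltn_ord i.
rewrite iterSr /par /= iterT inordK //; lia.
Qed.

Lemma dpathE (x : Rvert m.+1) u :
  on_dpath par (bot x) (len x) u <-> u = (x.1,false) \/ (u.2 = true /\ inC' u.1 x).
Proof.
case: x => j [l hl].
have hj := ltn_ord j.
rewrite /on_dpath /bot /inC' /=.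
split.
- move=> [[|s] [hs <-]]; first by left.
  right; rewrite iterF /=; split=> //; rewrite inordK; last by lia.
  move: hs; rewrite /len /=.
  case: l hl => [|[|[|[|l]]]] hl //= hs.
  + split; first by lia. constructor 1; split=> //; lia.
  + move: hs; case: (ltnP j m) => hj2 hs.
    * split; first by lia. constructor 2; split=> //. lia.
    * split; first by lia. constructor 2; split=> //; lia.
  + move: hs; case: (ltnP j m) => hj2 hs.
    * split; first by lia. constructor 3; split=> //; lia.
    * lia.
- case: u => c b; have hc' := ltn_ord c.
  move=> [[-> ->]|[/= -> [hc H]]]; first by exists 0; split.
  have [hcj hlen] : c <= j /\ (minn j (m-1) - c).+1 <= len (j, Ordinal hl).
    rewrite /len /=; case: H => [[-> h]|[-> h]|[-> h]] /=.
    + lia.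
    + case: (ltnP j m) => h2; lia.
    + case: (ltnP j m) => h2; lia.
  exists (minn j (m-1) - c).+1; split=> //.
  rewrite iterF; congr pair; apply: val_inj; rewrite /= inordK; lia.
Qed.

Lemma main_m : rooted_directed_path_graph (@R_adj m.+1).
Proof.
exists ((('I_m.+1 * bool)%type) : finType), par, (ord0, true).
split.
  split; first by rewrite /par /= (_ : inord 0 = ord0) //; apply: val_inj; rewrite /= inordK.
  move=> [i [|]].
    exists i; rewrite iterT subnn; congr pair; apply: val_inj; by rewrite /= inordK.
  exists (minn i (m-1)).+1; rewrite (iterF (minn i (m-1))) subnn; congr pair; apply: val_inj; by rewrite /= inordK.
exists bot, len => x y hxy.
split.
- move=> [_ [[i [hi [hx hy]]]|[i [hx hy]]]].
  + have hxi : x.1 = Ordinal hi by apply: val_inj.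
    exists (x.1, false); split; apply/dpathE; left=> //.
    by congr pair; apply: val_inj; rewrite /= hx hy.
  + have hi : i < m.+1 by case: hx => h _; lia.
    exists (Ordinal hi, true); split; apply/dpathE; right; split=> //.
- move=> [u [/dpathE hx /dpathE hy]]; split=> //.
  case: hx => [ex|[eb hx]]; case: hy => [ey|[eb' hy]].
  + left; exists x.1; split; first exact: ltn_ord.
    rewrite /inC; split=> //. by rewrite ex in ey; case: ey => ->.
  + by rewrite ex in eb'.
  + by rewrite ey in eb.
  + by right; exists u.1.
Qed.
End S.

Theorem mainTheorem2 (n : nat) (hn : 3 <= n) :
  rooted_directed_path_graph (@R_adj n).
Proof.
case: n hn => [|m] hn //.
by apply: main_m; lia.
Qed.
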